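(* Let $m\ge1$, $q=2^m$, let $n$ be even, let $L$ be a $2$-linear polynomial over $\mathbb F_{q^n}$, and let $A\in\mathbb F_{q^n}^*$. Then $\mathrm{Tr}(x^{q+1})+L(x)$ is a permutation polynomial of $\mathbb F_{q^n}$ if and only if $\ker(\mathrm{Tr}_2\circ L^\prime)\subseteq\ker\mathrm{Tr}$ and $\ker L=\{0\}$. If $A^{\frac{q^n-1}{q+1}}\ne1$, then $\mathrm{Tr}(Ax^{q+1})+L(x)$ is not a permutation polynomial of $\mathbb F_{q^n}$.
   Context: $\mathrm{Tr}$ denotes the trace map of $\mathbb F_{q^n}$ over $\mathbb F_q$ and $\mathrm{Tr}_2$ the trace map of $\mathbb F_{q^n}$ over $\mathbb F_{q^2}$. A $2$-linear polynomial over $\mathbb F_{q^n}$ has the form $L(x)=\sum_{j=0}^{mn-1}a_jx^{2^j}$; its adjoint is $L^\prime(x)=\sum_j(a_jx)^{2^{-j}}$, where $y\mapsto y^{2^{-j}}$ is the inverse of $y\mapsto y^{2^j}$ on $\mathbb F_{q^n}$. Polynomials are regarded as maps on $\mathbb F_{q^n}$; $\ker$ denotes the kernel of an additive map. *)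

(* Defs.v *)
From HB Require Import structures.
From mathcomp Require Import all_boot all_order all_algebra all_field.
Set Implicit Arguments. Unset Strict Implicit. Unset Printing Implicit Defensive.
Import GRing.Theory.
Local Open Scope ring_scope.

Definition Tr (F : fieldType) (q n : nat) (x : F) : F :=
  \sum_(i < n) x ^+ (q ^ i).

Definition Tr2 (F : fieldType) (q n : nat) (x : F) : F :=
  \sum_(i < n./2) x ^+ ((q ^ 2) ^ i).

Definition lin2 (F : fieldType) (N : nat) (a : 'I_N -> F) (x : F) : F :=
  \sum_(j < N) a j * x ^+ (2 ^ j).

(* Adjoint L'(x) = sum_j (a_j x)^(2^{-j}); on a field of order 2^N the
   inverse of y |-> y^(2^j) (j < N) is y |-> y^(2^(N-j)). *)
Definition lin2_adj (F : fieldType) (N : nat) (a : 'I_N -> F) (x : F) : F :=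
  \sum_(j < N) (a j * x) ^+ (2 ^ (N - j)).

Definition kerF (F : finFieldType) (f : F -> F) : {set F} :=
  [set x | f x == 0].

(* Main.v *)
Require Import Defs.
From HB Require Import structures.
From mathcomp Require Import all_boot all_order all_algebra all_field.
From mathcomp Require Import zify ring.
Import GRing.Theory.
Local Open Scope ring_scope.

Section Gen.
Variable F : finFieldType.
Hypothesis hchar : 2%N \in [pchar F].
Variable N : nat.
Hypothesis hcard : #|F| = (2 ^ N)%N.

Lemma nat2X k : [pchar F].-nat (2 ^ k)%N.
Proof. by rewrite pnatX (pnatE _ (isT : prime 2)) hchar. Qed.

Lemma frobD k (x y : F) : (x + y) ^+ (2 ^ k) = x ^+ (2 ^ k) + y ^+ (2 ^ k).
Proof. exact: exprDn_pchar (nat2X k). Qed.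

Lemma frob0 k : (0 : F) ^+ (2 ^ k) = 0.
Proof. by rewrite expr0n expn_eq0. Qed.

Lemma frob_sum k (I : Type) (r : seq I) (P : pred I) (g : I -> F) :
  (\sum_(i <- r | P i) g i) ^+ (2 ^ k) = \sum_(i <- r | P i) g i ^+ (2 ^ k).
Proof. exact: (big_morph (fun x : F => x ^+ (2 ^ k)) (frobD k) (frob0 k)). Qed.

Lemma frobfrob (x : F) a b : x ^+ (2 ^ a) ^+ (2 ^ b) = x ^+ (2 ^ (a + b)).
Proof. by rewrite -exprM -expnD. Qed.

Lemma fermat (x : F) : x ^+ (2 ^ N) = x.
Proof. by rewrite -hcard expf_card. Qed.

Lemma fermatk (x : F) k : x ^+ (2 ^ (N * k)) = x.
Proof.
elim: k => [|k IH]; first by rewrite muln0 expr1.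
by rewrite mulnS -frobfrob fermat IH.
Qed.

Lemma addrr (x : F) : x + x = 0.
Proof. exact: addrr_pchar2. Qed.

Lemma oppr2 (x : F) : - x = x.
Proof. exact: oppr_pchar2. Qed.

Lemma add_eq0 (x y : F) : (x + y == 0) = (x == y).
Proof. by rewrite -{1}[y]oppr2 subr_eq0. Qed.

Definition Tb b s (y : F) := \sum_(i < s) y ^+ (2 ^ (b * i)).

Lemma shift_sum s (g : nat -> F) : g s = g 0%N ->
  \sum_(i < s) g i.+1 = \sum_(i < s) g i.
Proof.
move=> h; case: s h => [|s] h; first by rewrite !big_ord0.
have e1 := big_ord_recr s.+1 g; have e2 := big_ord_recl s.+1 g.
rewrite /= in e1 e2.
apply: (@addIr _ (g s.+1)).
have -> : \sum_(i < s.+1) g i.+1 + g s.+1 = \sum_(i < s.+2) g i.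
  by rewrite e2 h addrC.
by rewrite e1.
Qed.

Lemma Tb_add b s x y : Tb b s (x + y) = Tb b s x + Tb b s y.
Proof. by rewrite /Tb -big_split; apply: eq_bigr => i _; rewrite frobD. Qed.

Lemma Tb0 b s : Tb b s 0 = 0.
Proof. by rewrite /Tb big1 // => i _; rewrite frob0. Qed.

Lemma Tb_sum b s (I : Type) (r : seq I) (P : pred I) (g : I -> F) :
  Tb b s (\sum_(i <- r | P i) g i) = \sum_(i <- r | P i) Tb b s (g i).
Proof. exact: (big_morph (Tb b s) (Tb_add b s) (Tb0 b s)). Qed.


Lemma Tb_frobin b s y : (b * s = N)%N -> Tb b s (y ^+ (2 ^ b)) = Tb b s y.
Proof.
move=> hbs; rewrite /Tb.
rewrite -(@shift_sum s (fun i => y ^+ (2 ^ (b * i)))) /=; last by rewrite hbs muln0 fermat expr1.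
by apply: eq_bigr => i _; rewrite frobfrob mulnS addnC.
Qed.

Lemma Tb_frob b s y : (b * s = N)%N -> (Tb b s y) ^+ (2 ^ b) = Tb b s y.
Proof.
move=> hbs; rewrite /Tb frob_sum.
rewrite -(@shift_sum s (fun i => y ^+ (2 ^ (b * i)))) /=; last by rewrite hbs muln0 fermat expr1.
by apply: eq_bigr => i _; rewrite frobfrob mulnS addnC.
Qed.

Lemma fix_iter b (c : F) i : c ^+ (2 ^ b) = c -> c ^+ (2 ^ (b * i)) = c.
Proof.
move=> h; elim: i => [|i IH]; first by rewrite muln0 expr1.
by rewrite mulnS -frobfrob h IH.
Qed.

Lemma Tb_scal b s c y : c ^+ (2 ^ b) = c -> Tb b s (c * y) = c * Tb b s y.
Proof.
move=> h; rewrite /Tb mulr_sumr; apply: eq_bigr => i _.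
by rewrite exprMn (fix_iter _ _ _ h).
Qed.

Lemma Tb_const b s c : c ^+ (2 ^ b) = c -> Tb b s c = c *+ s.
Proof.
move=> h; rewrite /Tb (eq_bigr (fun _ => c)) ?sumr_const ?card_ord // => i _.
exact: (fix_iter _ _ _ h).
Qed.

Lemma Ttrans b s y : Tb 1 b (Tb b s y) = Tb 1 (s * b) y.
Proof.
rewrite /Tb.
transitivity (\sum_(k < b) \sum_(i < s) y ^+ (2 ^ (b * i + k))%N).
  by apply: eq_bigr => k _; rewrite frob_sum; apply: eq_bigr => i _; rewrite frobfrob mul1n.
rewrite exchange_big /= -(big_mkord xpredT (fun j => y ^+ (2 ^ (1 * j)))).
rewrite big_nat_mul big_mkord; apply: eq_bigr => i _.
rewrite -{1}(add0n (i * b)%N) big_addn mulSn addnK big_mkord.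
by apply: eq_bigr => k _; rewrite !mul1n addnC mulnC.
Qed.


Lemma T_frobk k y : Tb 1 N (y ^+ (2 ^ k)) = Tb 1 N y.
Proof.
elim: k => [|k IH]; first by rewrite expr1.
by rewrite -[k.+1]addn1 -frobfrob Tb_frobin ?mul1n.
Qed.

Hypothesis hN : (0 < N)%N.

Lemma T_nonzero : exists y, Tb 1 N y != 0.
Proof.
pose p : {poly F} := \sum_(k < N) 'X^(2 ^ (1 * k)).
have hp y : p.[y] = Tb 1 N y.
  by rewrite /p horner_sum; apply: eq_bigr => k _; rewrite hornerXn.
have szp : (size p <= (2 ^ N.-1).+1)%N.
  apply: leq_trans (size_sum _ _ _) _; apply/bigmax_leqP => k _.
  by rewrite size_polyXn ltnS leq_exp2l // mul1n -ltnS prednK.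
have k0lt : (N.-1 < N)%N by rewrite ltn_predL.
have p0 : p != 0.
  apply/eqP => h; have := congr1 (fun p : {poly F} => p`_(2 ^ N.-1)) h.
  rewrite coef0 /p coef_sum (bigD1 (Ordinal k0lt)) //= coefXn mul1n eqxx big1 ?addr0.
    by move/eqP; rewrite oner_eq0.
  move=> i /eqP hi; rewrite coefXn mul1n eqn_exp2l //.
  case: eqP => // e; case: hi; apply: val_inj => /=; by rewrite e.
apply/existsP; apply: contraT; rewrite negb_exists => /forallP hall.
have := max_poly_roots p0 (rs := enum F).
rewrite enum_uniq -cardE hcard.
have -> : all (root p) (enum F).
  by apply/allP => y _; rewrite rootE hp; move: (hall y); rewrite negbK.
move=> /(_ isT isT) h; have := leq_trans h szp.
move: hN; clear; case: N => // N' _.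
rewrite expnS /=; have : (0 < 2 ^ N')%N by rewrite expn_gt0.
move: (2 ^ N')%N => x; lia.
Qed.

Lemma T_nondeg t : t != 0 -> exists u, Tb 1 N (t * u) != 0.
Proof.
move=> t0; have [y hy] := T_nonzero; exists (t^-1 * y).
by rewrite mulVKf.
Qed.

Lemma Tb_surj b s c : (b * s = N)%N -> c ^+ (2 ^ b) = c -> exists y, Tb b s y = c.
Proof.
move=> hbs hc; have [y0 hy0] := T_nonzero.
set t := Tb b s y0.
have ht : t != 0.
  apply: contraNneq hy0 => e; by rewrite -hbs mulnC -Ttrans -/t e Tb0.
exists ((c / t) * y0); rewrite Tb_scal ?divfK //.
by rewrite exprMn exprVn hc Tb_frob.
Qed.

Lemma lin2D (a : 'I_N -> F) x y : lin2 a (x + y) = lin2 a x + lin2 a y.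
Proof. by rewrite /lin2 -big_split; apply: eq_bigr => j _; rewrite frobD mulrDr. Qed.

Lemma lin20 (a : 'I_N -> F) : lin2 a 0 = 0.
Proof. by rewrite /lin2 big1 // => j _; rewrite frob0 mulr0. Qed.

Lemma lin2_adjD (a : 'I_N -> F) x y : lin2_adj a (x + y) = lin2_adj a x + lin2_adj a y.
Proof. by rewrite /lin2_adj -big_split; apply: eq_bigr => j _; rewrite mulrDr frobD. Qed.

Lemma adjoint (a : 'I_N -> F) x y :
  Tb 1 N (lin2 a x * y) = Tb 1 N (x * lin2_adj a y).
Proof.
rewrite /lin2 /lin2_adj mulr_suml mulr_sumr !Tb_sum; apply: eq_bigr => j _.
rewrite -[in RHS](T_frobk j); congr (Tb 1 N _).
rewrite exprMn frobfrob subnK ?fermat; last exact: ltnW.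
by rewrite mulrA [_ * x ^+ _]mulrC.
Qed.

Lemma add_inj (f : F -> F) : (forall x y, f (x + y) = f x + f y) ->
  (forall x, f x = 0 -> x = 0) -> injective f.
Proof.
move=> hadd hk x y e; apply/eqP; rewrite -add_eq0; apply/eqP; apply: hk.
by rewrite hadd e addrr.
Qed.

Lemma inj_surj (f : F -> F) : injective f -> forall c, exists z, f z = c.
Proof. by move=> /injF_bij [g fg gf] c; exists (g c); rewrite gf. Qed.


Variables m n : nat.
Hypothesis hNmn : N = (m * n)%N.
Hypothesis hm : (1 <= m)%N.
Hypothesis hn : ~~ odd n.
Local Notation q := (2 ^ m)%N.

Lemma hn2 : n = (n./2 * 2)%N.
Proof. by rewrite muln2 -{1}(odd_double_half n) (negbTE hn). Qed.

Lemma hn0 : (0 < n)%N.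
Proof. by move: hN; rewrite hNmn muln_gt0 => /andP []. Qed.

Lemma hmn : (m * n = N)%N. Proof. by rewrite hNmn. Qed.
Lemma hmn2 : ((m * 2) * n./2 = N)%N. Proof. by rewrite hNmn -mulnA [(2 * _)%N]mulnC -hn2. Qed.

Lemma Tr_eq y : Tr q n y = Tb m n y.
Proof. by rewrite /Tr /Tb; apply: eq_bigr => i _; rewrite -expnM. Qed.

Lemma Tr2_eq y : Tr2 q n y = Tb (m * 2) n./2 y.
Proof. by rewrite /Tr2 /Tb; apply: eq_bigr => i _; rewrite -!expnM mulnA. Qed.

Lemma TbF u : (Tb m n u) ^+ q = Tb m n u.
Proof. exact: Tb_frob hmn. Qed.

Definition fA A (a : 'I_N -> F) x := Tb m n (A * x ^+ q.+1) + lin2 a x.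
Definition dA A (z : F) := A * z + (A * z ^+ q) ^+ q.
Definition cA A (a : 'I_N -> F) z := Tb m n (A * z ^+ q.+1) + lin2 a z.

Lemma diffA A a x z :
  fA A a (x + z) = fA A a x + cA A a z + Tb m n (x ^+ q * dA A z).
Proof.
rewrite /fA /cA /dA.
have e1 : A * (x + z) ^+ q.+1 = A * x ^+ q.+1 + A * z ^+ q.+1 +
     (x ^+ q * (A * z) + A * x * z ^+ q).
  by rewrite !exprS frobD; ring.
have e2 : Tb m n (A * x * z ^+ q) = Tb m n (x ^+ q * (A * z ^+ q) ^+ q).
  by rewrite -(@Tb_frobin m n _ hmn) !exprMn; congr (Tb m n _); ring.
rewrite e1 !Tb_add e2 mulrDr Tb_add lin2D; ring.
Qed.

Lemma fA0 A a : fA A a 0 = 0.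
Proof. by rewrite /fA expr0n /= mulr0 Tb0 lin20 addr0. Qed.

Lemma surjB d c : d != 0 -> c ^+ q = c -> exists x, Tb m n (x ^+ q * d) = c.
Proof.
move=> d0 hc; have [y hy] := @Tb_surj m n c hmn hc.
exists ((y / d) ^+ (2 ^ (m * n.-1))).
rewrite frobfrob -mulnSr prednK ?hn0 // hmn fermat divfK //.
Qed.

Lemma char2_solve (u v w : F) : u + v + w = 0 -> v = u + w.
Proof.
move=> h; rewrite -[v]addr0 -h.
rewrite (_ : v + (u + v + w) = u + w + (v + v)); last by ring.
by rewrite addrr addr0.
Qed.

Lemma injA A a : injective (fA A a) <->
  (forall z, z != 0 -> lin2 a z ^+ q = lin2 a z -> dA A z = 0 /\ cA A a z != 0).
Proof.
split.
- move=> hinj z z0 hL.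
  have cF : cA A a z ^+ q = cA A a z by rewrite /cA frobD TbF hL.
  have hd : dA A z = 0.
    apply/eqP; apply: contraNT z0 => d0.
    have [x hx] := surjB _ _ d0 cF.
    have := diffA A a x z; rewrite hx -addrA addrr addr0 => /hinj.
    by rewrite -{2}[x]addr0 => /addrI ->.
  split => //; apply: contra z0 => /eqP c0.
  have := diffA A a 0 z; rewrite hd mulr0 Tb0 fA0 c0 !addr0 add0r.
  by move=> h; apply/eqP; apply: hinj; rewrite h fA0.
- move=> H x y e.
  have hy : y = x + (x + y) by rewrite addKr_pchar2.
  apply/eqP; rewrite -add_eq0; apply/negPn/negP => z0.
  move: e; rewrite hy diffA; set z := x + y in z0 *.
  move=> e.
  have e' : cA A a z + Tb m n (x ^+ q * dA A z) = 0.
    by apply: (addrI (fA A a x)); rewrite addrA -e addr0.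
  have hL : lin2 a z ^+ q = lin2 a z.
    by move: e'; rewrite /cA => /char2_solve ->; rewrite frobD !TbF.
  have [hd hc] := H z z0 hL.
  by move: e'; rewrite hd mulr0 Tb0 addr0 => /eqP; rewrite (negbTE hc).
Qed.

Lemma d1 z : dA 1 z = 0 <-> z ^+ (2 ^ (m * 2)) = z.
Proof.
rewrite /dA !mul1r frobfrob addnn -muln2; split.
- by move/eqP; rewrite add_eq0 => /eqP/esym.
- by move=> ->; rewrite addrr.
Qed.

Lemma tr0 z : z ^+ (2 ^ (m * 2)) = z -> Tb m n (1 * z ^+ q.+1) = 0.
Proof.
move=> hz; rewrite mul1r.
have wF : (z ^+ q.+1) ^+ q = z ^+ q.+1.
  by rewrite exprS exprMn frobfrob addnn -muln2 hz mulrC.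
rewrite (Tb_const _ _ _ wF) hn2 mulnC mulrnA mulr2n addrr mul0rn //.
Qed.

Lemma inj1 a : injective (fA 1 a) <->
  (forall z, lin2 a z = 0 -> z = 0) /\
  (forall z, lin2 a z ^+ q = lin2 a z -> z ^+ (2 ^ (m * 2)) = z).
Proof.
rewrite injA; split.
- move=> H; split.
  + move=> z hz; apply/eqP; apply: contraT => z0.
    have := H z z0; rewrite hz frob0 => /(_ erefl) [/d1 hd].
    by rewrite /cA tr0 // hz addr0 eqxx.
  + move=> z hL; have [->|z0] := eqVneq z 0; first by rewrite frob0.
    by case: (H z z0 hL) => /d1.
- move=> [hk hf] z z0 hL; have hz := hf z hL.
  split; first by apply/d1.
  rewrite /cA tr0 // add0r; apply: contra z0 => /eqP /hk ->; done.
Qed.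

Lemma TtransN b s y : (b * s = N)%N -> Tb 1 N y = Tb 1 b (Tb b s y).
Proof. by move=> h; rewrite Ttrans mulnC h. Qed.

Lemma m2N : (m * 2 <= N)%N.
Proof.
rewrite hNmn leq_mul2l; apply/orP; right.
have := hn2; have := hn0; lia.
Qed.

Lemma condA (a : 'I_N -> F) : (forall z, lin2 a z = 0 -> z = 0) ->
  ((forall z, lin2 a z ^+ q = lin2 a z -> z ^+ (2 ^ (m * 2)) = z) <->
   (forall x, Tb (m * 2) n./2 (lin2_adj a x) = 0 -> Tb m n x = 0)).
Proof.
move=> hk.
have Linj : injective (lin2 a) := @add_inj (lin2 a) (lin2D a) hk.
have Lsurj := @inj_surj _ Linj.
split.
- move=> H x hx; apply/eqP; apply: contraT => t0.
  have [y0 hy0] := T_nonzero.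
  pose u := Tb m n y0; pose c := u / Tb m n x.
  have cF : c ^+ q = c by rewrite exprMn exprVn !TbF.
  have [z hz] := Lsurj c.
  have zF : z ^+ (2 ^ (m * 2)) = z by apply: H; rewrite hz.
  have e1 : Tb 1 N (c * x) = Tb 1 N y0.
    rewrite (@TtransN m n _ hmn) (Tb_scal _ _ _ _ cF) divfK //.
    by rewrite /u Ttrans mulnC hmn.
  have e2 : Tb 1 N (c * x) = 0.
    by rewrite -hz adjoint (@TtransN (m * 2) n./2 _ hmn2) (Tb_scal _ _ _ _ zF) hx mulr0 Tb0.
  by move: hy0; rewrite -e1 e2 eqxx.
- move=> H z hL.
  have Lainj : injective (lin2_adj a).
    apply: (@add_inj (lin2_adj a) (lin2_adjD a)) => y hy.
    apply/eqP; apply: contraT => y0.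
    have [u hu] := T_nondeg _ y0.
    have [x hx] := Lsurj u.
    by move: hu; rewrite mulrC -hx adjoint hy mulr0 Tb0 eqxx.
  have Lasurj := @inj_surj _ Lainj.
  set e := z + z ^+ (2 ^ (m * 2)).
  suff : e = 0 by move/eqP; rewrite add_eq0 => /eqP/esym.
  apply/eqP; apply: contraT => e0.
  have [u hu] := T_nondeg _ e0.
  pose v := u ^+ (2 ^ (N - m * 2)).
  have hv : v ^+ (2 ^ (m * 2)) = u by rewrite frobfrob subnK ?fermat // m2N.
  have [x hx] := Lasurj (v ^+ (2 ^ (m * 2)) + v).
  have htr : Tb (m * 2) n./2 (lin2_adj a x) = 0.
    by rewrite hx Tb_add (@Tb_frobin _ _ _ hmn2) addrr.
  have hx0 := H x htr.
  have : Tb 1 N (z * lin2_adj a x) = 0.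
    by rewrite -adjoint (@TtransN m n _ hmn) (Tb_scal _ _ _ _ hL) hx0 mulr0 Tb0.
  rewrite hx mulrDr Tb_add hv.
  have -> : Tb 1 N (z * v) = Tb 1 N (z ^+ (2 ^ (m * 2)) * u).
    by rewrite -(T_frobk (m * 2)) exprMn hv.
  by move=> h; move: hu; rewrite /e mulrDl Tb_add h eqxx.
Qed.

Lemma pow_pred1 (w : F) k : w != 0 -> (0 < k)%N -> w ^+ k = w -> w ^+ k.-1 = 1.
Proof. by move=> w0 k0 h; apply: (mulfI w0); rewrite mulr1 -exprS prednK. Qed.

Lemma part2 a A : A != 0 -> A ^+ ((q ^ n).-1 %/ q.+1) != 1 -> ~ injective (fA A a).
Proof.
move=> A0 hA hinj.
have [z z0 hL] : exists2 z, z != 0 & lin2 a z ^+ q = lin2 a z.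
  case: (boolP [exists z, (z != 0) && (lin2 a z == 0)]).
  - move=> /existsP [z /andP [z0 /eqP hz]]; exists z => //; by rewrite hz frob0.
  - rewrite negb_exists => /forallP hall.
    have hk : forall z, lin2 a z = 0 -> z = 0.
      move=> z hz; apply/eqP; move: (hall z); rewrite hz eqxx andbT; by rewrite negbK.
    have [z hz] := @inj_surj _ (@add_inj (lin2 a) (lin2D a) hk) 1.
    exists z; last by rewrite hz expr1n.
    by apply: contraNneq (oner_neq0 F) => e; rewrite -hz e lin20.
have [hd _] := (injA A a).1 hinj z z0 hL.
have hAq : (A * z ^+ q) ^+ q = A * z.
  by move/eqP: hd; rewrite /dA add_eq0 => /eqP/esym.
pose cc := A * z ^+ q.+1.
have ccF : cc ^+ q = cc.
  rewrite /cc exprSr mulrA exprMn hAq; ring.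
have cc0 : cc != 0 by rewrite mulf_neq0 // expf_neq0.
have hAcc : A = cc / z ^+ q.+1 by rewrite /cc mulfK // expf_neq0.
pose K := (\sum_(i < n./2) (q ^ 2) ^ i)%N.
have hE : ((q ^ n).-1 = q.+1 * (q.-1 * K))%N.
  rewrite {1}hn2 mulnC expnM predn_exp (predn_exp q 2) !big_ord_recl big_ord0.
  rewrite expn0 expn1 addn0 add1n /K mulnA [(q.-1 * _)%N]mulnC; done.
have hE2 : ((q ^ n).-1 %/ q.+1 = q.-1 * K)%N by rewrite hE mulKn.
have hq : (q ^ n)%N = #|F| by rewrite -expnM -hNmn hcard.
have q0 : (0 < q)%N by rewrite expn_gt0.
have F0 : (0 < #|F|)%N by rewrite hcard expn_gt0.
move: hA; rewrite hE2 {1}hAcc exprMn exprVn -exprM -hE hq exprM.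
rewrite (pow_pred1 _ _ cc0 q0 ccF) expr1n mul1r.
by rewrite (pow_pred1 _ _ z0 F0 (expf_card z)) invr1 eqxx.
Qed.
End Gen.

Theorem mainTheorem10 (m n : nat) (F : finFieldType)
  (hm : (1 <= m)%N) (hn : ~~ odd n)
  (hchar : 2%N \in [pchar F]) (hcard : #|F| = (2 ^ (m * n))%N) :
  let q := (2 ^ m)%N in
  (forall a : 'I_(m * n) -> F,
     bijective (fun x : F => Tr q n (x ^+ q.+1) + lin2 a x) <->
     (kerF (fun x => Tr2 q n (lin2_adj a x)) \subset kerF (Tr q n)
      /\ kerF (lin2 a) = [set 0])) /\
  (forall (a : 'I_(m * n) -> F) (A : F), A != 0 ->
     A ^+ ((q ^ n).-1 %/ q.+1) != 1 ->
     ~ bijective (fun x : F => Tr q n (A * x ^+ q.+1) + lin2 a x)).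
Proof.
move=> q.
have h1 : (1 < #|F|)%N.
  by apply/card_gt1P; exists 0, 1; split => //; rewrite eq_sym oner_neq0.
have hN : (0 < m * n)%N by move: h1; rewrite hcard; case: (m * n)%N.
split.
- move=> a.
  have ef : (fun x => Tr q n (x ^+ q.+1) + lin2 a x) =1 fA F (m * n) m n 1 a.
    by move=> x; rewrite /fA Tr_eq mul1r.
  have ker1 : kerF (lin2 a) = [set 0] <-> (forall z, lin2 a z = 0 -> z = 0).
    split.
      move=> e z hz; have : z \in kerF (lin2 a) by rewrite inE hz.
      by rewrite e inE => /eqP.
    move=> h; apply/setP => z; rewrite !inE; apply/eqP/eqP => [/h|->] //.
    exact: lin20.
  have ker2 : kerF (fun x => Tr2 q n (lin2_adj a x)) \subset kerF (Tr q n) <->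
      (forall x, Tb F (m * 2) n./2 (lin2_adj a x) = 0 -> Tb F m n x = 0).
    split.
      move=> /subsetP s x hx; have := s x.
      by rewrite !inE Tr2_eq Tr_eq hx eqxx => /(_ isT) /eqP.
    by move=> h; apply/subsetP => x; rewrite !inE Tr2_eq Tr_eq => /eqP /h ->.
  have I1 := @inj1 F hchar (m * n)%N hcard hN m n (erefl _) hn a.
  have C1 := @condA F hchar (m * n)%N hcard hN m n (erefl _) hm hn a.
  split.
  + move=> /bij_inj hi; have hi' := eq_inj hi ef.
    have [hk hf] := I1.1 hi'.
    split; last exact/ker1.
    by apply/ker2; apply: (C1 hk).1.
  + move=> [k2 k1]; have hk := ker1.1 k1.
    apply: injF_bij; apply: (eq_inj _ (fsym ef)); apply: I1.2; split => //.
    by apply: (C1 hk).2; apply/ker2.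
- move=> a A A0 hA /bij_inj hi.
  have ef : (fun x => Tr q n (A * x ^+ q.+1) + lin2 a x) =1 fA F (m * n) m n A a.
    by move=> x; rewrite /fA Tr_eq.
  exact: (@part2 F hchar (m * n)%N hcard hN m n (erefl _) hn a A A0 hA (eq_inj hi ef)).
Qed.
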